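(* Let $(X,G)$ be a $G$-system with metric $d$ and $(F_n)$ a Følner sequence in $G$. For $\alpha,\varepsilon\in(0,1)$ define $d_{\alpha,\varepsilon}(x,y)=d(x,y)$ if $d(x,y)\ge\varepsilon$ and $d_{\alpha,\varepsilon}(x,y)=\varepsilon^{1-\alpha}d(x,y)^\alpha$ if $d(x,y)<\varepsilon$. Then $$\overline{\mathrm{mdim}}_{\mathrm H}(X,\{F_n\},d_{\alpha,\varepsilon})=\frac{\overline{\mathrm{mdim}}_{\mathrm H}(X,\{F_n\},d)}{\alpha}.$$
   Context: $G$ is a countable discrete amenable group; a $G$-system is a compact metric space with a continuous $G$-action. For finite nonempty $F\subset G$, $\rho_F(x,y)=\max_{g\in F}\rho(gx,gy)$. $\mathrm H^s_\varepsilon(X,\rho)=\inf\{\sum_{i\ge1}(\mathrm{diam}_\rho E_i)^s: X=\bigcup_iE_i,\ \mathrm{diam}_\rho E_i<\varepsilon\}$ (with $0^0=1$), $\dim_{\mathrm H}(X,\rho,\varepsilon)=\sup\{s\ge0:\mathrm H^s_\varepsilon(X,\rho)\ge1\}$, and $\overline{\mathrm{mdim}}_{\mathrm H}(X,\{F_n\},\rho)=\lim_{\varepsilon\to0}\limsup_{n}\frac{\dim_{\mathrm H}(X,\rho_{F_n},\varepsilon)}{|F_n|}$. *)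

(* Defs.v *)
From HB Require Import structures.
From mathcomp Require Import all_boot all_order all_algebra.
From mathcomp Require Import all_classical all_reals all_analysis.
Set Implicit Arguments. Unset Strict Implicit. Unset Printing Implicit Defensive.
Import Order.TTheory GRing.Theory Num.Theory numFieldNormedType.Exports.
Local Open Scope classical_set_scope.
Local Open Scope ring_scope.

Record group_laws (G : Type) (mul : G -> G -> G) (one : G) (inv : G -> G)
  : Prop := GroupLaws {
  mulA : forall a b c, mul a (mul b c) = mul (mul a b) c;
  mul1g : forall a, mul one a = a;
  mulg1 : forall a, mul a one = a;
  mulVg : forall a, mul (inv a) a = one;
  mulgV : forall a, mul a (inv a) = one }.

Definition is_metric {R : realType} {X : Type} (d : X -> X -> R) : Prop :=
  [/\ forall x y, 0 <= d x y,
      forall x y, d x y = 0 <-> x = y,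
      forall x y, d x y = d y x &
      forall x y z, d x z <= d x y + d y z].

(* sequential compactness (equivalent to compactness for metric spaces) *)
Definition seq_compact {R : realType} {X : Type} (d : X -> X -> R) : Prop :=
  forall u : nat -> X, exists (phi : nat -> nat) (x : X),
    (forall n, (phi n < phi n.+1)%N) /\
    ((fun n => d (u (phi n)) x) @ \oo --> (0 : R)).

Definition compact_metric {R : realType} {X : Type} (d : X -> X -> R) : Prop :=
  is_metric d /\ seq_compact d.

Definition metric_continuous {R : realType} {X : Type} (d : X -> X -> R)
  (f : X -> X) : Prop :=
  forall x (e : R), 0 < e -> exists2 del : R, 0 < del &
    forall y, d x y < del -> d (f x) (f y) < e.

Definition G_system {R : realType} {G X : Type} (mul : G -> G -> G) (one : G)
  (d : X -> X -> R) (act : G -> X -> X) : Prop :=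
  [/\ compact_metric d,
      forall g, metric_continuous d (act g),
      forall x, act one x = x &
      forall g h x, act (mul g h) x = act g (act h x)].

(* a finite set F ⊂ G is represented by a duplicate-free list; |F| = size F *)
(* |gF Δ F| = |gF \ F| + |F \ gF| *)
Definition symdiff_card {G : eqType} (mul : G -> G -> G) (g : G) (F : seq G)
  : nat :=
  (size [seq x <- F | mul g x \notin F] +
   size [seq y <- F | y \notin [seq mul g x | x <- F]])%N.

Definition Folner {R : realType} {G : eqType} (mul : G -> G -> G)
  (F : nat -> seq G) : Prop :=
  (forall n, uniq (F n) /\ F n != [::]) /\
  forall g : G,
    (fun n => (symdiff_card mul g (F n))%:R / (size (F n))%:R : R)
      @ \oo --> (0 : R).

Definition rhoF {R : realType} {G X : Type} (act : G -> X -> X)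
  (rho : X -> X -> R) (F : seq G) : X -> X -> R :=
  fun x y => \big[Order.max/0]_(g <- F) rho (act g x) (act g y).

Local Open Scope ereal_scope.

(* diameter, with diam of the empty set = 0 *)
Definition diam {R : realType} {X : Type} (rho : X -> X -> R) (E : set X)
  : \bar R :=
  ereal_sup ([set (rho x y)%:E | x in E & y in E] `|` [set 0]).

(* H^s_eps(X, rho): infimum over countable covers {E_i}_{i in J}, J ⊆ nat,
   with diam E_i < eps, of sum (diam E_i)^s  (powR 0 0 = 1, i.e. 0^0 = 1) *)
Definition Hmeas {R : realType} {X : Type} (rho : X -> X -> R) (s eps : R)
  : \bar R :=
  ereal_inf [set v | exists (J : set nat) (E : nat -> set X),
     [/\ [set: X] = \bigcup_(i in J) E i,
         (forall i, J i -> diam rho (E i) < eps%:E) &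
         v = \esum_(i in J) ((fine (diam rho (E i))) `^ s)%:E]].

Definition dimH {R : realType} {X : Type} (rho : X -> X -> R) (eps : R)
  : \bar R :=
  ereal_sup [set s%:E | s in [set s : R | (0 <= s)%R /\ 1 <= Hmeas rho s eps]].

Definition mdimH {R : realType} {G X : Type} (act : G -> X -> X)
  (F : nat -> seq G) (rho : X -> X -> R) : \bar R :=
  lim ((fun eps : R =>
          limn_esup (fun n => dimH (rhoF act rho (F n)) eps
                               * ((size (F n))%:R^-1)%:E)) x
       @[x --> 0^'+]).

Definition d_ae {R : realType} {X : Type} (d : X -> X -> R) (alpha eps : R)
  : X -> X -> R :=
  fun x y => if (eps <= d x y)%R then d x y
             else (eps `^ (1 - alpha) * (d x y) `^ alpha)%R.

(* Main.v *)
Require Import Defs.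
From mathcomp Require Import all_boot all_order all_algebra.
From mathcomp Require Import all_classical all_reals all_analysis.
From mathcomp Require Import ring lra.
Import Order.TTheory GRing.Theory Num.Theory numFieldNormedType.Exports.
Local Open Scope classical_set_scope.
Local Open Scope ring_scope.

Definition phi {R : realType} (alpha eps t : R) : R :=
  if eps <= t then t else eps `^ (1 - alpha) * t `^ alpha.

Lemma powR_eps {R : realType} (alpha eps : R) : 0 < eps ->
  eps `^ (1 - alpha) * eps `^ alpha = eps.
Proof.
move=> e0; rewrite -powRD; last by apply/implyP => _; rewrite gt_eqF.
by rewrite subrK powRr1 // ltW.
Qed.

Lemma phi0 {R : realType} (alpha eps : R) : 0 < alpha -> 0 < eps ->
  phi alpha eps 0 = 0.
Proof.
move=> a0 e0; rewrite /phi leNgt e0 /= powR0 ?mulr0 // gt_eqF //.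
Qed.

Lemma phi_le {R : realType} (alpha eps t u : R) : 0 < alpha -> 0 < eps ->
  0 <= t -> t <= u -> phi alpha eps t <= phi alpha eps u.
Proof.
move=> a0 e0 t0 tu; have u0 : 0 <= u by apply: le_trans tu.
rewrite /phi; case: (leP eps t) => et.
  by rewrite (le_trans et tu).
have pa : forall v w : R, 0 <= v -> v <= w -> v `^ alpha <= w `^ alpha.
  by move=> v w v0 vw; apply: ge0_ler_powR => //; rewrite ?nnegrE ?(ltW a0) // (le_trans v0 vw).
case: (leP eps u) => eu.
  apply: (le_trans _ eu); rewrite -[X in _ <= X](@powR_eps _ alpha eps e0).
  by rewrite ler_wpM2l ?powR_ge0 // pa // ltW.
by rewrite ler_wpM2l ?powR_ge0 // pa.
Qed.

Lemma max_phi {R : realType} (alpha eps a b : R) : 0 < alpha -> 0 < eps ->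
  0 <= a -> 0 <= b ->
  Order.max (phi alpha eps a) (phi alpha eps b) = phi alpha eps (Order.max a b).
Proof.
move=> a0 e0 a_ge0 b_ge0.
case: (leP a b) => h.
  by apply: max_r; apply: phi_le.
by apply: max_l; apply: phi_le => //; exact: ltW.
Qed.

Lemma bigmax_phi {R : realType} {I : Type} (alpha eps : R) (s : seq I)
  (f : I -> R) : 0 < alpha -> 0 < eps -> (forall i, 0 <= f i) ->
  \big[Order.max/0]_(i <- s) phi alpha eps (f i) =
  phi alpha eps (\big[Order.max/0]_(i <- s) f i).
Proof.
move=> a0 e0 f0; elim: s => [|a s IH].
  by rewrite !big_nil phi0.
rewrite !big_cons IH.
have b0 : 0 <= \big[Order.max/0]_(i <- s) f i by apply: bigmax_ge_id.
exact: max_phi.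
Qed.

Lemma rhoF_dae {R : realType} {G X : Type} (act : G -> X -> X)
  (d : X -> X -> R) (alpha eps : R) (s : seq G) : 0 < alpha -> 0 < eps ->
  (forall x y, 0 <= d x y) -> forall x y,
  rhoF act (d_ae d alpha eps) s x y = phi alpha eps (rhoF act d s x y).
Proof.
move=> a0 e0 d0 x y; rewrite /rhoF -bigmax_phi //.
Qed.

Lemma rhoF_ge0 {R : realType} {G X : Type} (act : G -> X -> X)
  (d : X -> X -> R) (s : seq G) x y : 0 <= rhoF act d s x y.
Proof. exact: bigmax_ge_id. Qed.

Definition rr {R : realType} (alpha eps delta : R) : R :=
  ln delta / (alpha * ln delta + ln (eps `^ (1 - alpha))).

Lemma powR_pos {R : realType} (x y : R) : 0 < x -> x `^ y = expR (y * ln x).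
Proof. by move=> x0; rewrite /powR gt_eqF. Qed.

Section Core.
Variables (R : realType) (X : Type) (rho rho' : X -> X -> R)
  (alpha eps delta : R).
Hypothesis rho_ge0 : forall x y, 0 <= rho x y.
Hypothesis rho'E : forall x y, rho' x y = phi alpha eps (rho x y).
Hypothesis a0 : 0 < alpha.
Hypothesis a1 : alpha < 1.
Hypothesis e0 : 0 < eps.
Hypothesis e1 : eps < 1.
Hypothesis d0 : 0 < delta.
Hypothesis de : delta <= eps.

Let c := eps `^ (1 - alpha).
Let eta := c * delta `^ alpha.

Lemma c_gt0 : 0 < c.
Proof. exact: powR_gt0. Qed.

Lemma c_le1 : c <= 1.
Proof.
rewrite /c -[X in _ <= X](powRr0 eps); apply: (@ger_powR _ eps).
  by rewrite e0 (ltW e1).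
rewrite subr_ge0; exact: ltW.
Qed.

Lemma powa_le (v w : R) : 0 <= v -> v <= w -> v `^ alpha <= w `^ alpha.
Proof.
by move=> v0 vw; apply: ge0_ler_powR => //; rewrite ?nnegrE ?(ltW a0) // (le_trans v0 vw).
Qed.

Lemma powa_lt (v w : R) : 0 <= v -> v < w -> v `^ alpha < w `^ alpha.
Proof.
by move=> v0 vw; apply: gt0_ltr_powR => //; rewrite ?nnegrE // (le_trans v0 (ltW vw)).
Qed.

Lemma eta_gt0 : 0 < eta.
Proof. by rewrite /eta mulr_gt0 ?c_gt0 ?powR_gt0. Qed.

Lemma eta_le_eps : eta <= eps.
Proof.
rewrite /eta -[X in _ <= X](@powR_eps _ alpha eps e0).
by rewrite ler_wpM2l ?(ltW c_gt0) // powa_le // ltW.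
Qed.

Local Open Scope ereal_scope.

Lemma diam_ge0 (r : X -> X -> R) E : 0 <= diam r E.
Proof. by apply: ereal_sup_ubound; right. Qed.

Lemma diam_ub (r : X -> X -> R) E x y : E x -> E y -> (r x y)%:E <= diam r E.
Proof. by move=> Ex Ey; apply: ereal_sup_ubound; left; exists x => //; exists y. Qed.

Lemma diam_le (r : X -> X -> R) E (M : R) : (0 <= M)%R ->
  (forall x y, E x -> E y -> (r x y <= M)%R) -> diam r E <= M%:E.
Proof.
move=> M0 H; apply: ge_ereal_sup => _ [[x Ex [y Ey <-]]|->]; last by rewrite lee_fin.
by rewrite lee_fin H.
Qed.

Lemma diam_fin (r : X -> X -> R) E (z : R) : diam r E < z%:E ->
  [/\ diam r E = (fine (diam r E))%:E, (0 <= fine (diam r E))%R &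
      (fine (diam r E) < z)%R].
Proof.
move=> h; have h0 := diam_ge0 r E.
have hf : diam r E \is a fin_num.
  by rewrite ge0_fin_numE // (lt_trans h) ?ltey.
split; first by rewrite fineK.
  by rewrite fine_ge0.
by rewrite -lte_fin fineK.
Qed.

Lemma transfer_small E : diam rho E < delta%:E ->
  diam rho' E < eta%:E /\
  (fine (diam rho' E) <= c * (fine (diam rho E)) `^ alpha)%R.
Proof.
move=> /diam_fin [DE D0 Dd].
set D := fine (diam rho E) in DE D0 Dd *.
have H : diam rho' E <= (c * D `^ alpha)%:E.
  apply: diam_le; first by rewrite mulr_ge0 ?powR_ge0 // ltW // c_gt0.
  move=> x y Ex Ey; have := @diam_ub rho E x y Ex Ey; rewrite DE lee_fin => hxy.
  rewrite rho'E /phi; case: ifPn => [he|_].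
    by exfalso; move: (le_lt_trans (le_trans he hxy) (lt_le_trans Dd de)); rewrite ltxx.
  by rewrite ler_wpM2l ?(ltW c_gt0) // powa_le.
have Hlt : (c * D `^ alpha < eta)%R.
  by rewrite /eta ltr_pM2l ?c_gt0 // powa_lt.
have H2 : diam rho' E < eta%:E by apply: le_lt_trans H _; rewrite lte_fin.
split => //.
have [DE' _ _] := @diam_fin _ _ _ H2.
by rewrite -lee_fin -DE'.
Qed.

Lemma transfer_back E : diam rho' E < eta%:E ->
  diam rho E < delta%:E /\
  (c * (fine (diam rho E)) `^ alpha <= fine (diam rho' E))%R.
Proof.
move=> /diam_fin [DE D0 Dd].
set D := fine (diam rho' E) in DE D0 Dd *.
set u := ((D / c) `^ alpha^-1)%R.
have cpos := c_gt0.
have u0 : (0 <= u)%R by exact: powR_ge0.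
have uK : (c * u `^ alpha = D)%R.
  rewrite /u -powRrM mulVf ?gt_eqF // powRr1 ?divr_ge0 // ?(ltW cpos) //.
  by rewrite mulrC divfK ?gt_eqF.
have ud : (u < delta)%R.
  have -> : delta = ((delta `^ alpha) `^ alpha^-1)%R.
    by rewrite -powRrM mulfV ?gt_eqF // powRr1 // ltW.
  apply: gt0_ltr_powR.
  - by rewrite invr_gt0.
  - by rewrite nnegrE divr_ge0 // ltW.
  - by rewrite nnegrE powR_ge0.
  by rewrite ltr_pdivrMr // mulrC.
have H : diam rho E <= u%:E.
  apply: diam_le => // x y Ex Ey.
  have := @diam_ub rho' E x y Ex Ey; rewrite DE lee_fin rho'E /phi.
  case: ifPn => [he hxy|_ hxy].
    by exfalso; move: (le_lt_trans (le_trans he hxy) (lt_le_trans Dd eta_le_eps)); rewrite ltxx.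
  have hx : ((rho x y) `^ alpha <= D / c)%R by rewrite ler_pdivlMr // mulrC.
  have -> : rho x y = (((rho x y) `^ alpha) `^ alpha^-1)%R.
    by rewrite -powRrM mulfV ?gt_eqF // powRr1.
  apply: ge0_ler_powR; rewrite ?invr_ge0 ?nnegrE ?powR_ge0 ?(ltW a0) //.
  by rewrite divr_ge0 // ltW.
have H2 : diam rho E < delta%:E by apply: le_lt_trans H _; rewrite lte_fin.
split; first exact: H2.
have [DE' D0' _] := @diam_fin _ _ _ H2.
rewrite -uK ler_wpM2l ?(ltW cpos) //; apply: powa_le => //.
by rewrite -lee_fin -DE'.
Qed.

Local Close Scope ereal_scope.

Lemma termU (D D' s : R) : 0 <= D -> 0 <= D' -> D' <= c * D `^ alpha ->
  0 <= s -> D' `^ s <= D `^ (alpha * s).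
Proof.
move=> D0 D'0 h s0.
have cD0 : 0 <= c * D `^ alpha by rewrite mulr_ge0 ?powR_ge0 // ltW // c_gt0.
apply: (le_trans (ge0_ler_powR s0 _ _ h)); rewrite ?nnegrE //.
rewrite powRM ?powR_ge0 ?(ltW c_gt0) // -powRrM.
apply: ler_piMl; first exact: powR_ge0.
rewrite -[X in _ <= X](powRr0 c); apply: (@ger_powR _ c) => //.
by rewrite c_gt0 c_le1.
Qed.

Lemma rr_gt0 : 0 < rr alpha eps delta.
Proof.
have la : ln delta < 0 by rewrite ln_lt0 // d0 (le_lt_trans de e1).
have lb : ln c <= 0 by rewrite ln_le0 // c_le1.
have q0 : alpha * ln delta + ln c < 0 by rewrite -(addr0 0) ltr_leD // pmulr_rlt0.
by rewrite /rr -/c -mulrNN -invrN divr_gt0 // oppr_gt0.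
Qed.

Lemma termL (D D' t : R) : 0 <= D -> D < delta -> c * D `^ alpha <= D' ->
  0 <= t -> D `^ t <= D' `^ (rr alpha eps delta * t).
Proof.
move=> D0 Dd h t0.
have cpos := c_gt0.
have cD0 : 0 <= c * D `^ alpha by rewrite mulr_ge0 ?powR_ge0 ?ltW.
have rpos := rr_gt0.
have D'0 : 0 <= D' := le_trans cD0 h.
have st0 : 0 <= rr alpha eps delta * t := mulr_ge0 (ltW rpos) t0.
apply: (le_trans _ (ge0_ler_powR st0 _ _ h)); rewrite ?nnegrE //.
have [->|Dpos] := eqVneq D 0.
  have [->|tn0] := eqVneq t 0; first by rewrite mulr0 !powRr0.
  by rewrite powR0 // powR_ge0.
have Dp : 0 < D by rewrite lt_neqAle eq_sym Dpos D0.
have cDp : 0 < c * D `^ alpha by rewrite mulr_gt0 ?powR_gt0.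
rewrite (@powR_pos _ _ _ Dp) (@powR_pos _ _ _ cDp) ler_expR lnM ?posrE ?powR_gt0 // ln_powR.
have la : ln delta < 0 by rewrite ln_lt0 // d0 (le_lt_trans de e1).
have lb : ln c <= 0 by rewrite ln_le0 // c_le1.
have lL : ln D < ln delta by rewrite ltr_ln ?posrE.
set a := ln delta in la lL *; set b := ln c in lb *; set L := ln D in lL *.
have q0 : alpha * a + b < 0 by rewrite -(addr0 0) ltr_leD // pmulr_rlt0.
have -> : rr alpha eps delta = a / (alpha * a + b) by [].
rewrite -subr_ge0.
have -> : a / (alpha * a + b) * t * (b + alpha * L) - t * L =
          t * ((- b) * (a - L) / (- (alpha * a + b))).
  by field; rewrite lt_eqF.
apply: mulr_ge0 => //; apply: divr_ge0; last by rewrite oppr_ge0 ltW.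
by apply: mulr_ge0; rewrite ?oppr_ge0 ?subr_ge0 ?(ltW lL).
Qed.

Local Open Scope ereal_scope.

Lemma HU s : (0 <= s)%R -> 1 <= Hmeas rho' s eta -> 1 <= Hmeas rho (alpha * s) delta.
Proof.
move=> s0 h; apply: le_ereal_inf_tmp => _ [J [E [cov HdE ->]]].
apply: (le_trans h).
apply: (@le_trans _ _ (\esum_(i in J) ((fine (diam rho' (E i))) `^ s)%:E)).
  apply: ereal_inf_lbound; exists J, E; split => // i Ji.
  exact: (proj1 (@transfer_small (E i) (HdE i Ji))).
apply: le_esum => i Ji; rewrite lee_fin.
have [_ D0 _] := @diam_fin _ _ _ (HdE i Ji).
apply: termU => //; first by rewrite fine_ge0 // diam_ge0.
exact: (proj2 (@transfer_small (E i) (HdE i Ji))).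
Qed.

Lemma HL t : (0 <= t)%R -> 1 <= Hmeas rho t delta ->
  1 <= Hmeas rho' (rr alpha eps delta * t) eta.
Proof.
move=> t0 h; apply: le_ereal_inf_tmp => _ [J [E [cov HdE ->]]].
apply: (le_trans h).
apply: (@le_trans _ _ (\esum_(i in J) ((fine (diam rho (E i))) `^ t)%:E)).
  apply: ereal_inf_lbound; exists J, E; split => // i Ji.
  exact: (proj1 (@transfer_back (E i) (HdE i Ji))).
apply: le_esum => i Ji; rewrite lee_fin.
have [hb hc] := @transfer_back (E i) (HdE i Ji).
have [_ D0 Dd] := @diam_fin _ _ _ hb.
exact: termL.
Qed.

Lemma dimU : dimH rho' eta <= dimH rho delta * (alpha^-1)%:E.
Proof.
apply: ge_ereal_sup => _ [s [s0 hs] <-].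
rewrite lee_pdivlMr // -EFinM; apply: ereal_sup_ubound; exists (alpha * s)%R; last by rewrite mulrC.
split; first by rewrite mulr_ge0 // ltW.
exact: HU.
Qed.

Lemma dimL : dimH rho delta <= dimH rho' eta * ((rr alpha eps delta)^-1)%:E.
Proof.
apply: ge_ereal_sup => _ [t [t0 ht] <-].
rewrite lee_pdivlMr ?rr_gt0 // -EFinM; apply: ereal_sup_ubound; exists (rr alpha eps delta * t)%R; last by rewrite mulrC.
split; first by rewrite mulr_ge0 // ltW // rr_gt0.
exact: HL.
Qed.

End Core.

Local Open Scope ereal_scope.

Lemma limn_esup_le {R : realType} (u v : (\bar R)^nat) :
  (forall n, u n <= v n) -> limn_esup u <= limn_esup v.
Proof.
move=> uv; rewrite /limn_esup !limf_esupE.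
apply: le_ereal_inf_tmp => _ [V HV <-].
apply: (@le_trans _ _ (ereal_sup (u @` V))).
  by apply: ereal_inf_lbound; exists V.
apply: ge_ereal_sup => _ [n Vn <-]; apply: (le_trans (uv n)).
by apply: ereal_sup_ubound; exists n.
Qed.

Lemma limn_esupZ {R : realType} (u : (\bar R)^nat) (k : R) : (0 < k)%R ->
  limn_esup (fun n => u n * k%:E) = limn_esup u * k%:E.
Proof.
move=> k0; rewrite /limn_esup !limf_esupE muleC -ereal_inf_pZl //.
congr ereal_inf; apply/seteqP; split.
- move=> _ /= [V HV <-]; exists (ereal_sup (u @` V)); first by exists V.
  rewrite -ereal_sup_pZl // image_comp; congr ereal_sup.
  by apply: eq_imagel => n _ /=; rewrite muleC.
- move=> _ /= [_ [V HV <-] <-]; exists V => //; rewrite -ereal_sup_pZl // image_comp; congr ereal_sup.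
  by apply: eq_imagel => n _ /=; rewrite muleC.
Qed.

Lemma Hmeas_le {R : realType} {X : Type} (r : X -> X -> R) s (a b : R) :
  (a <= b)%R -> Hmeas r s b <= Hmeas r s a.
Proof.
move=> ab; apply: ereal_inf_le_tmp => _ [J [E [cov H ->]]]; exists J, E; split => // i Ji.
by apply: (lt_le_trans (H i Ji)); rewrite lee_fin.
Qed.

Lemma dimH_le {R : realType} {X : Type} (r : X -> X -> R) (a b : R) :
  (a <= b)%R -> dimH r b <= dimH r a.
Proof.
move=> ab; apply: ereal_sup_le => _ [s [s0 hs] <-]; exists s => //; split => //.
exact: (le_trans hs (@Hmeas_le _ _ r s _ _ ab)).
Qed.

Lemma lim_noninc {R : realType} (f : R -> \bar R) :
  (forall x y, (0 < x)%R -> (x <= y)%R -> f y <= f x) ->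
  lim (f x @[x --> 0^'+]) = ereal_sup (f @` [set` `]0%R, +oo[]).
Proof.
move=> fn; apply: cvg_lim => //.
apply: nonincreasing_at_right_cvge => //.
by move=> x y; rewrite !in_itv /= !andbT => x0 y0 xy; exact: fn.
Qed.

Lemma mdimH_sup {R : realType} {G X : Type} (act : G -> X -> X)
  (F : nat -> seq G) (rho : X -> X -> R) :
  mdimH act F rho = ereal_sup ((fun del => limn_esup (fun n =>
     dimH (rhoF act rho (F n)) del * ((size (F n))%:R^-1)%:E)) @` [set` `]0%R, +oo[]).
Proof.
rewrite /mdimH.
apply: cvg_lim; first done.
apply: nonincreasing_at_right_cvge; first by [].
move=> x y; rewrite !in_itv /= !andbT => x0 y0 xy.
apply: limn_esup_le => n; apply: lee_wpmul2r.
  by rewrite lee_fin invr_ge0.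
exact: dimH_le.
Qed.

Lemma divr_lt0_lt0' {R : realType} (a b : R) : (a < 0)%R -> (b < 0)%R -> (0 < a / b)%R.
Proof. by move=> a0 b0; rewrite -mulrNN -invrN divr_gt0 // oppr_gt0. Qed.

Lemma divr_le0_lt0' {R : realType} (a b : R) : (a <= 0)%R -> (b < 0)%R -> (0 <= a / b)%R.
Proof. by move=> a0 b0; rewrite -mulrNN -invrN divr_ge0 ?oppr_ge0 // ltW // oppr_gt0. Qed.

Lemma final_step {R : realType} (alpha eps delta : R) (x y : \bar R) :
  (0 < alpha)%R -> (alpha < 1)%R -> (0 < eps)%R -> (eps < 1)%R -> (0 < delta)%R ->
  (forall d', (0 < d')%R -> (d' <= delta)%R -> (d' <= eps)%R ->
     x <= y * ((rr alpha eps d')^-1)%:E) ->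
  x <= y * alpha%:E.
Proof.
move=> a0 a1 e0 e1 dl0 H.
have lc0 : (ln (eps `^ (1 - alpha)) <= 0)%R.
  rewrite ln_le0 // -[X in (_ <= X)%R](powRr0 eps); apply: (@ger_powR _ eps).
    by rewrite e0 (ltW e1).
  by rewrite subr_ge0; exact: ltW.
have Hd' : forall d', (0 < d')%R -> (d' <= eps)%R ->
    [/\ (ln d' < 0)%R, (0 < rr alpha eps d')%R &
        ((rr alpha eps d')^-1 = alpha + ln (eps `^ (1 - alpha)) / ln d')%R].
  move=> d' d'0 d'e.
  have la : (ln d' < 0)%R by rewrite ln_lt0 // d'0 (le_lt_trans d'e e1).
  have q0 : (alpha * ln d' + ln (eps `^ (1 - alpha)) < 0)%R.
    by rewrite -(addr0 0%R) ltr_leD // pmulr_rlt0.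
  split => //.
    exact: divr_lt0_lt0'.
  rewrite /rr invf_div; field.
  by rewrite lt_eqF.
case: y H => [m||] H.
- apply/lee_addgt0Pr => e e0'.
  set lc := ln (eps `^ (1 - alpha)) in lc0 Hd'.
  set P := (`|m| * (- lc) / e)%R.
  have P0 : (0 <= P)%R by rewrite /P divr_ge0 ?mulr_ge0 ?oppr_ge0 // ltW.
  set d' := Order.min (Order.min delta eps) (expR (- P)).
  have d'0 : (0 < d')%R by rewrite !lt_min dl0 e0 expR_gt0.
  have d'd : (d' <= delta)%R by rewrite !ge_min lexx.
  have d'e : (d' <= eps)%R by rewrite !ge_min lexx orbT.
  have lP : (ln d' <= - P)%R.
    by rewrite -[X in (_ <= X)%R]expRK ler_ln ?posrE ?expR_gt0 // ge_min lexx orbT.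
  have [la rpos rE] := Hd' d' d'0 d'e.
  apply: (le_trans (H d' d'0 d'd d'e)).
  rewrite -EFinM -EFinD lee_fin rE mulrDr lerD2l.
  have g0 : (0 <= lc / ln d')%R by exact: divr_le0_lt0'.
  apply: (le_trans (ler_wpM2r g0 (ler_norm m))).
  have -> : (`|m| * (lc / ln d') = (P * e) / (- ln d'))%R.
    rewrite /P; field.
    by rewrite lt_eqF // gt_eqF.
  rewrite ler_pdivrMr ?oppr_gt0 // [X in (_ <= X)%R]mulrC ler_pM2r //.
  by rewrite lerNr.
- by rewrite gt0_mulye ?lte_fin // leey.
- have := H (Order.min delta eps).
  rewrite lt_min dl0 e0 ge_min lexx ge_min lexx orbT => /(_ isT isT isT).
  have [_ rpos _] := Hd' (Order.min delta eps) (ltac:(by rewrite lt_min dl0 e0)) (ltac:(by rewrite ge_min lexx orbT)).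
  rewrite gt0_mulNye ?lte_fin ?invr_gt0 // leeNy_eq => /eqP ->.
  exact: leNye.
Qed.

Lemma sup_relation {R : realType} (A B : R -> \bar R) (alpha eps : R) :
  (0 < alpha)%R -> (alpha < 1)%R -> (0 < eps)%R -> (eps < 1)%R ->
  (forall x y, (0 < x)%R -> (x <= y)%R -> A y <= A x) ->
  (forall x y, (0 < x)%R -> (x <= y)%R -> B y <= B x) ->
  (forall del, (0 < del)%R -> (del <= eps)%R ->
     B (eps `^ (1 - alpha) * del `^ alpha)%R <= A del * (alpha^-1)%:E) ->
  (forall del, (0 < del)%R -> (del <= eps)%R ->
     A del <= B (eps `^ (1 - alpha) * del `^ alpha)%R * ((rr alpha eps del)^-1)%:E) ->
  ereal_sup (B @` [set` `]0%R, +oo[]) = ereal_sup (A @` [set` `]0%R, +oo[]) * (alpha^-1)%:E.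
Proof.
move=> a0 a1 e0 e1 Amono Bmono KU KL.
set c := (eps `^ (1 - alpha))%R.
have cpos : (0 < c)%R by exact: powR_gt0.
have etapos : forall del, (0 < del)%R -> (0 < c * del `^ alpha)%R.
  by move=> del dl0; rewrite mulr_gt0 // powR_gt0.
apply/eqP; rewrite eq_le; apply/andP; split.
  apply: ge_ereal_sup => _ [eta etaI <-].
  move: etaI; rewrite /= in_itv /= andbT => eta0.
  set del := Order.min eps ((eta / c) `^ alpha^-1)%R.
  have dl0 : (0 < del)%R by rewrite lt_min e0 powR_gt0 // divr_gt0.
  have dle : (del <= eps)%R by rewrite ge_min lexx.
  have eta'le : (c * del `^ alpha <= eta)%R.
    have h1 : (del `^ alpha <= eta / c)%R.
      have -> : (eta / c = ((eta / c) `^ alpha^-1) `^ alpha)%R.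
        by rewrite -powRrM mulVf ?gt_eqF // powRr1 // ltW // divr_gt0.
      apply: ge0_ler_powR; rewrite ?nnegrE ?(ltW a0) ?(ltW dl0) ?powR_ge0 //.
      by rewrite ge_min lexx orbT.
    by rewrite -ler_pdivlMl // mulrC.
  apply: (le_trans (Bmono _ _ (etapos _ dl0) eta'le)).
  apply: (le_trans (KU _ dl0 dle)); apply: lee_wpmul2r.
    by rewrite lee_fin invr_ge0 ltW.
  by apply: ereal_sup_ubound; exists del => //; rewrite /= in_itv /= andbT.
rewrite muleC -ereal_sup_pZl ?invr_gt0 //.
apply: ge_ereal_sup => _ [_ [del delI <-] <-].
move: delI; rewrite /= in_itv /= andbT => dl0.
rewrite muleC lee_pdivrMr //.
apply: (@final_step R alpha eps del _ _ a0 a1 e0 e1 dl0) => d' d'0 d'd d'e.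
apply: (le_trans (Amono _ _ d'0 d'd)); apply: (le_trans (KL _ d'0 d'e)).
apply: lee_wpmul2r.
  rewrite lee_fin invr_ge0 ltW //.
  exact: (@rr_gt0 R alpha eps d').
apply: ereal_sup_ubound; exists (c * d' `^ alpha)%R => //.
by rewrite /= in_itv /= andbT etapos.
Qed.

Local Close Scope ereal_scope.

Theorem mainTheorem11 (R : realType) (G : countType)
  (mul : G -> G -> G) (one : G) (inv : G -> G)
  (HG : group_laws mul one inv)
  (X : Type) (d : X -> X -> R) (act : G -> X -> X)
  (Hsys : G_system mul one d act)
  (F : nat -> seq G) (HF : Folner (R:=R) mul F)
  (alpha eps : R) (Ha : 0 < alpha < 1) (He : 0 < eps < 1) :
  mdimH act F (d_ae d alpha eps) = (mdimH act F d * (alpha^-1)%:E)%E.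
Proof.
move: Ha He => /andP[a0 a1] /andP[e0 e1].
have d0 : forall x y, 0 <= d x y.
  by case: Hsys => [[[hd _ _ _] _] _ _ _].
have Npos : forall n, 0 < (size (F n))%:R^-1 :> R.
  move=> n; rewrite invr_gt0 ltr0n lt0n size_eq0.
  by case: (proj1 HF n).
rewrite !mdimH_sup.
apply: (@sup_relation R _ _ alpha eps a0 a1 e0 e1).
- move=> x y x0 xy; apply: limn_esup_le => n; apply: lee_wpmul2r.
    by rewrite lee_fin invr_ge0.
  exact: dimH_le.
- move=> x y x0 xy; apply: limn_esup_le => n; apply: lee_wpmul2r.
    by rewrite lee_fin invr_ge0.
  exact: dimH_le.
- move=> del dl0 dle; rewrite -limn_esupZ ?invr_gt0 //.
  apply: limn_esup_le => n; rewrite muleAC; apply: lee_wpmul2r.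
    by rewrite lee_fin invr_ge0.
  apply: dimU => //; first by move=> *; exact: rhoF_ge0.
  by move=> x y; apply: rhoF_dae.
- move=> del dl0 dle; rewrite -limn_esupZ ?invr_gt0; last exact: rr_gt0.
  apply: limn_esup_le => n; rewrite muleAC; apply: lee_wpmul2r.
    by rewrite lee_fin invr_ge0.
  apply: dimL => //; first by move=> *; exact: rhoF_ge0.
  by move=> x y; apply: rhoF_dae.
Qed.
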